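(* Let $(A,u)$ be a unital Abelian po-group. Consider the functor $\mathbf{POG}_u\to(A,u)\downarrow\mathbf{POG}_u$ sending $(B,v)$ to $\iota_{A,B}\colon (A,u)\to (A\otimes B,u\otimes v)$, $a\mapsto a\otimes v$. This functor admits a right adjoint which sends an object $h\colon(A,u)\to(B,v)$ of $(A,u)\downarrow\mathbf{POG}_u$ to the unital po-group $([A,B]_h,h)$.
   Context: $\mathbf{POG}_u$ is the category of Abelian partially ordered groups $A$ with an order unit $u\in A^+$ (for every $x\in A$ there is $n\in\mathbb{N}$ with $x\le nu$); morphisms are order-preserving group homomorphisms preserving the order units. The tensor product of $(A,u)$ and $(B,v)$ in $\mathbf{POG}_u$ is $(A\otimes B,u\otimes v)$, where $A\otimes B$ is the tensor product of Abelian groups with positive cone consisting of all sums $a_1\otimes b_1+\dots+a_n\otimes b_n$ with $a_i\in A^+$, $b_i\in B^+$; it is universal for bihomomorphisms (maps additive in each variable, mapping $A^+\times B^+$ into the positive cone, and sending $(u,v)$ to the unit). $(A,u)\downarrow\mathbf{POG}_u$ is the under category (objects: morphisms out of $(A,u)$; morphisms: commuting triangles). $[A,B]$ denotes the Abelian group of all group homomorphisms $A\to B$, partially ordered by the cone of order-preserving homomorphisms; for $h\colon(A,u)\to(B,v)$, $[A,B]_h$ is the largest subgroup of $[A,B]$ in which $h$ is an order unit, i.e. the set of $f\in[A,B]$ with $-nh\le f\le nh$ for some $n\in\mathbb{N}$. *)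

(* Defs.v *)
From HB Require Import structures.
From mathcomp Require Import all_boot all_algebra.
From mathcomp Require Import boolp classical_sets functions.

Set Implicit Arguments.
Unset Strict Implicit.
Unset Printing Implicit Defensive.

Import GRing.Theory.
Local Open Scope ring_scope.

(* x <= y  is  pos (y - x).                                                  *)
Record pog := POG {
  pog_car :> zmodType;
  pos : pog_car -> Prop;
  pos0 : pos 0;
  posD : forall x y, pos x -> pos y -> pos (x + y);
  pos_anti : forall x, pos x -> pos (- x) -> x = 0 }.

Definition is_order_unit (G : pog) (u : G) : Prop :=
  pos u /\ forall x : G, exists n : nat, pos (u *+ n - x).

Record upog := UPOG {
  upog_pog :> pog;
  ounit : upog_pog;
  ounitP : is_order_unit ounit }.

Definition additive_fun (X Y : zmodType) (f : X -> Y) : Prop :=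
  forall x y, f (x + y) = f x + f y.

Definition order_pres (X Y : pog) (f : X -> Y) : Prop :=
  forall x, pos x -> pos (f x).

Definition is_morph (X Y : upog) (f : X -> Y) : Prop :=
  [/\ additive_fun f, order_pres f & f (ounit X) = ounit Y].

Definition MorU (X Y : upog) := {f : X -> Y | is_morph f}.

(* Tensor product in POG_u, given by its defining properties:                *)
Definition biadditive (X Y : zmodType) (V : zmodType) (b : X -> Y -> V) : Prop :=
  (forall x x' y, b (x + x') y = b x y + b x' y) /\
  (forall x y y', b x (y + y') = b x y + b x y').

Definition is_tensor (X Y T : upog) (t : X -> Y -> T) : Prop :=
  [/\ biadditive t,
      (forall (V : zmodType) (b : X -> Y -> V), biadditive b ->
         exists g : T -> V, [/\ additive_fun g,
           (forall x y, g (t x y) = b x y) &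
           (forall g' : T -> V, additive_fun g' ->
              (forall x y, g' (t x y) = b x y) -> g' = g)]),
      (forall z : T, pos z <->
         exists s : seq (X * Y),
           all (fun p => `[< pos p.1 /\ pos p.2 >]) s /\
           z = \sum_(p <- s) t p.1 p.2) &
      ounit T = t (ounit X) (ounit Y)].

Section HomH.
Variables (A B : upog) (h : A -> B).

Definition in_homh (f : A -> B) : Prop :=
  additive_fun f /\
  exists n : nat, order_pres (h *+ n - f) /\ order_pres (f + h *+ n).

Definition homh_pred : {pred A -> B} := fun f => `[< in_homh f >].

Lemma additive_fun0 (X Y : zmodType) (f : X -> Y) : additive_fun f -> f 0 = 0.
Proof. by move=> fa; apply: (@addrI _ (f 0)); rewrite -fa !addr0. Qed.

Lemma additive_funN (X Y : zmodType) (f : X -> Y) x : additive_fun f -> f (- x) = - f x.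
Proof.
move=> fa; have := fa x (- x); rewrite subrr additive_fun0 // => /esym/eqP.
by rewrite addrC addr_eq0 => /eqP.
Qed.

Lemma posMn (G : pog) (x : G) n : pos x -> pos (x *+ n).
Proof.
move=> px; elim: n => [|n IH]; first by rewrite mulr0n; apply: pos0.
by rewrite mulrS; apply: posD.
Qed.

Lemma homh_closed : zmod_closed homh_pred.
Proof.
split.
  apply/asboolP; split; first by move=> x y /=; rewrite addr0.
  exists 0%N; split=> x _; rewrite !(natmulfctE, fctE) /= mulr0n;
    have -> : (0 : A -> B) x = 0 by []; rewrite ?subr0 ?addr0; apply: pos0.
move=> f g /asboolP [fa [n [f1 f2]]] /asboolP [ga [m [g1 g2]]].
apply/asboolP; split.
  move=> x y; rewrite !fctE fa ga opprD !addrA; congr (_ + _).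
  by rewrite -!addrA; congr (_ + _); rewrite addrC.
exists (n + m)%N; split=> x px; rewrite !(natmulfctE, fctE) /=.
  have := posD (f1 x px) (g2 x px); rewrite !(natmulfctE, fctE) /=.
  suff -> : h x *+ (n + m) - (f x - g x) = h x *+ n - f x + (g x + h x *+ m) by [].
  by rewrite mulrnDr opprB addrACA [RHS]addrACA [- f x + _]addrC.
have := posD (f2 x px) (g1 x px); rewrite !(natmulfctE, fctE) /=.
suff -> : f x - g x + h x *+ (n + m) = f x + h x *+ n + (h x *+ m - g x) by [].
by rewrite mulrnDr addrACA [- g x + _]addrC.
Qed.

HB.instance Definition _ := GRing.isZmodClosed.Build (A -> B) homh_pred homh_closed.

Definition homh_t := {f : A -> B | f \in homh_pred}.
HB.instance Definition _ := [isSub for (@sval _ _ : homh_t -> (A -> B))].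
HB.instance Definition _ := [Choice of homh_t by <:].
HB.instance Definition _ := [SubChoice_isSubZmodule of homh_t by <:].


Definition homh_pos (f : homh_t) : Prop := order_pres (val f).

Lemma homh_pos0 : homh_pos 0.
Proof. by move=> x _ /=; have -> : (0 : A -> B) x = 0 by []; apply: pos0. Qed.

Lemma homh_posD f g : homh_pos f -> homh_pos g -> homh_pos (f + g).
Proof. by move=> pf pg x px; rewrite raddfD /=; apply: posD; [apply: pf|apply: pg]. Qed.

Lemma homh_add (f : homh_t) : additive_fun (val f).
Proof. by case: f => f /= /asboolP []. Qed.

Lemma homh_pos_anti f : homh_pos f -> homh_pos (- f) -> f = 0.
Proof.
move=> pf pN; apply: val_inj; rewrite raddf0 /=; apply/funext => x.
change ((0 : A -> B) x) with (0 : B).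
have fN y : pos y -> val f y = 0.
  move=> py; apply: pos_anti; first exact: pf.
  by have := pN y py; rewrite raddfN.
have [_ /(_ x) [n pn]] := ounitP A.
have pnu : pos (ounit A *+ n) by apply: posMn; case: (ounitP A).
have -> : x = ounit A *+ n - (ounit A *+ n - x) by rewrite opprB addrC subrK.
by rewrite homh_add (additive_funN _ (homh_add f)) fN // fN // subr0.
Qed.

Definition homh_pog : pog := @POG homh_t homh_pos homh_pos0 homh_posD homh_pos_anti.

End HomH.

Section HomHU.
Variables (A B : upog) (h : MorU A B).

Lemma homh_self : sval h \in homh_pred (sval h).
Proof.
case: h => f [fa fp fu] /=; apply/asboolP; split=> //.
exists 1%N; split=> x px; rewrite !(natmulfctE, fctE) /= mulr1n.
  by rewrite subrr; apply: pos0.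
by apply: posD; apply: fp.
Qed.

Definition homh_unit : homh_pog (sval h) := exist _ (sval h) homh_self.

Lemma homh_unitP : is_order_unit homh_unit.
Proof.
have [_ fp _] := svalP h; split; first exact: fp.
move=> g; case: (svalP g) => /asboolP [_ [n [gn _]]].
by exists n => x px; rewrite raddfB raddfMn /=; apply: gn.
Qed.

Definition homh_upog : upog := @UPOG (homh_pog (sval h)) homh_unit homh_unitP.

End HomHU.

Definition hval (A B : upog) (h : MorU A B) (f : homh_upog h) : A -> B :=
  val (f : homh_t (sval h)).

Definition UHom (A X B : upog) (i : A -> X) (h : A -> B) :=
  {g : X -> B | is_morph g /\ forall a, g (i a) = h a}.

Definition iota_t (A C T : upog) (t : A -> C -> T) : A -> T := fun a => t a (ounit C).

(* Main.v *)
Require Import Defs.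
From HB Require Import structures.
From mathcomp Require Import all_boot all_algebra.
From mathcomp Require Import boolp classical_sets functions.

Set Implicit Arguments.
Unset Strict Implicit.
Unset Printing Implicit Defensive.
Import GRing.Theory.
Local Open Scope ring_scope.

Lemma sig_eqP (X : Type) (P : X -> Prop) (x y : {a | P a}) :
  sval x = sval y -> x = y.
Proof. case: x => x px; case: y => y py /= E; subst y; congr exist; exact: Prop_irrelevance. Qed.

Lemma additive_funB (X Y : zmodType) (f : X -> Y) x y :
  additive_fun f -> f (x - y) = f x - f y.
Proof. by move=> fa; rewrite fa (additive_funN _ fa). Qed.

Lemma additive_funMn (X Y : zmodType) (f : X -> Y) x n :
  additive_fun f -> f (x *+ n) = f x *+ n.
Proof.
move=> fa; elim: n => [|n IH]; first by rewrite !mulr0n (additive_fun0 fa).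
by rewrite !mulrS fa IH.
Qed.

Lemma pos_sum (G : pog) (I : eqType) (s : seq I) (F : I -> G) :
  (forall i, i \in s -> pos (F i)) -> pos (\sum_(i <- s) F i).
Proof.
elim: s => [|a s IH] H; first by rewrite big_nil; apply: pos0.
rewrite big_cons; apply: posD; first by apply: H; rewrite inE eqxx.
by apply: IH => i si; apply: H; rewrite inE si orbT.
Qed.

Lemma additive_fun_sum (X Y : zmodType) (f : X -> Y) (I : Type) (s : seq I) (F : I -> X) :
  additive_fun f -> f (\sum_(i <- s) F i) = \sum_(i <- s) f (F i).
Proof.
move=> fa; elim: s => [|a s IH]; first by rewrite !big_nil (additive_fun0 fa).
by rewrite !big_cons fa IH.
Qed.

Section S.
Variables (A : upog) (T : upog -> upog) (t : forall C : upog, A -> C -> T C)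
  (HT : forall C : upog, is_tensor (@t C)).

Lemma t_addl C x x' y : @t C (x + x') y = @t C x y + @t C x' y.
Proof. by case: (HT C) => [[H _] _ _ _]. Qed.
Lemma t_addr C x : additive_fun (@t C x).
Proof. by case: (HT C) => [[_ H] _ _ _] y y'; apply: H. Qed.
Lemma t_pos C x y : pos x -> pos y -> pos (@t C x y).
Proof.
move=> px py; case: (HT C) => _ _ H _; apply/H; exists [:: (x, y)]; split.
  by rewrite /= andbT; apply/asboolP.
by rewrite big_seq1.
Qed.

Section Phi.
Variables (C B : upog) (h : MorU A B) (g : UHom (iota_t (@t C)) (sval h)).

Definition phi_fun (c : C) : A -> B := fun a => sval g (@t C a c).

Lemma g_add : additive_fun (sval g).
Proof. by case: (svalP g) => [[]]. Qed.
Lemma g_pos : order_pres (sval g).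
Proof. by case: (svalP g) => [[]]. Qed.
Lemma g_io a : sval g (@t C a (ounit C)) = sval h a.
Proof. by case: (svalP g) => _ /(_ a). Qed.

Lemma phi_in c : phi_fun c \in homh_pred (sval h).
Proof.
apply/asboolP; split.
  by move=> x y; rewrite /phi_fun t_addl g_add.
have [_ /(_ c) [n1 pn1]] := ounitP C.
have [_ /(_ (- c)) [n2 pn2]] := ounitP C.
exists (n1 + n2)%N.
have ga : forall x, additive_fun (fun y => sval g (@t C x y)).
  by move=> x y z; rewrite t_addr g_add.
split=> x px; rewrite !(natmulfctE, fctE) /phi_fun.
  have hx : pos (sval h x *+ n2) by apply: posMn; case: (svalP h) => _ hp _; apply: hp.
  have := g_pos (t_pos px pn1); rewrite (additive_funB _ _ (ga x)) (additive_funMn _ _ (ga x)) g_io => P1.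
  by rewrite mulrnDr addrAC; apply: posD.
have hx : pos (sval h x *+ n1) by apply: posMn; case: (svalP h) => _ hp _; apply: hp.
have := g_pos (t_pos px pn2); rewrite (additive_funB _ _ (ga x)) (additive_funMn _ _ (ga x)) g_io (additive_funN _ (ga x)) opprK => P2.
rewrite mulrnDr addrA.
set a := sval g _; set b1 := sval h x *+ n1; set b2 := sval h x *+ n2.
have -> : a + b1 + b2 = b2 + a + b1 by rewrite addrC addrA.
exact: posD P2 hx.
Qed.

Definition phi_el (c : C) : homh_upog h :=
  (exist _ (phi_fun c) (phi_in c) : homh_t (sval h)).

Lemma phi_morph : is_morph phi_el.
Proof.
split.
- move=> x y; apply: val_inj; rewrite raddfD /=; apply/funext => a.
  by rewrite /phi_fun t_addr g_add.
- move=> x px a pa /=; rewrite /phi_fun; apply: g_pos; exact: t_pos.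
- apply: val_inj => /=; apply/funext => a; exact: g_io.
Qed.

Definition Phi0 : MorU C (homh_upog h) := exist _ phi_el phi_morph.
End Phi.

Section Psi.
Variables (C B : upog) (h : MorU A B) (F : MorU C (homh_upog h)).

Definition bF (a : A) (c : C) : B := hval (sval F c) a.

Lemma bF_bi : biadditive bF.
Proof.
split.
  by move=> x x' y; rewrite /bF /hval homh_add.
move=> x y y'; rewrite /bF; case: (svalP F) => Fa _ _; rewrite Fa.
by rewrite /hval raddfD.
Qed.

Lemma univ : exists g : T C -> B, [/\ additive_fun g,
           (forall x y, g (@t C x y) = bF x y) &
           (forall g' : T C -> B, additive_fun g' ->
              (forall x y, g' (@t C x y) = bF x y) -> g' = g)].
Proof. by case: (HT C) => _ H _ _; apply: H bF_bi. Qed.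

Definition psi_g : T C -> B := projT1 (cid univ).
Lemma psi_spec : [/\ additive_fun psi_g,
           (forall x y, psi_g (@t C x y) = bF x y) &
           (forall g' : T C -> B, additive_fun g' ->
              (forall x y, g' (@t C x y) = bF x y) -> g' = psi_g)].
Proof. exact: (projT2 (cid univ)). Qed.

Lemma psi_prop : is_morph psi_g /\ forall a, psi_g (iota_t (@t C) a) = sval h a.
Proof.
have [pa pt _] := psi_spec.
have [Fa Fp Fu] := svalP F.
have Fw : forall a, bF a (ounit C) = sval h a.
  by move=> a; rewrite /bF Fu.
split; last by move=> a; rewrite /iota_t pt Fw.
split => //.
- move=> z; case: (HT C) => _ _ H _; case/H => s [/allP sp ->].
  rewrite (additive_fun_sum _ _ pa); apply: pos_sum => p /sp /asboolP [p1 p2].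
  by rewrite pt; apply: (Fp _ p2).
- case: (HT C) => _ _ _ ->; rewrite pt Fw.
  by case: (svalP h) => _ _ ->.
Qed.

Definition Psi0 : UHom (iota_t (@t C)) (sval h) := exist _ psi_g psi_prop.
End Psi.
End S.

Theorem theorem4p7 (A : upog)
    (T : upog -> upog) (t : forall C : upog, A -> C -> T C)
    (HT : forall C : upog, is_tensor (t C)) :
  exists Phi : forall (C B : upog) (h : MorU A B),
      UHom (iota_t (t C)) (sval h) -> MorU C (homh_upog h),
    [/\ (forall (C B : upog) (h : MorU A B), bijective (Phi C B h)),
        (forall (C C' B : upog) (h : MorU A B) (k : MorU C' C) (m : MorU (T C') (T C)),
           (forall a c', sval m (t C' a c') = t C a (sval k c')) ->
           forall (g : UHom (iota_t (t C)) (sval h)) (g' : UHom (iota_t (t C')) (sval h)),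
             sval g' = sval g \o sval m ->
             sval (Phi C' B h g') = sval (Phi C B h g) \o sval k) &
        (forall (C B B' : upog) (h : MorU A B) (h' : MorU A B') (k : MorU B B'),
           (forall a, sval k (sval h a) = sval h' a) ->
           forall (g : UHom (iota_t (t C)) (sval h)) (g' : UHom (iota_t (t C)) (sval h')),
             sval g' = sval k \o sval g ->
             forall c : C, hval (sval (Phi C B' h' g') c) = sval k \o hval (sval (Phi C B h g) c))].
Proof.
exists (fun C B h g => @Phi0 A T t HT C B h g); split.
- move=> C B h; exists (@Psi0 A T t HT C B h).
  + move=> g; apply: sig_eqP => /=.
    case: (psi_spec HT (Phi0 HT g)) => _ _ U; symmetry; apply: U => //.
    exact: g_add.
  + move=> F; apply: sig_eqP; apply/funext => c; apply: val_inj; apply/funext => a /=.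
    by rewrite /phi_fun; case: (psi_spec HT F) => _ ->.
- move=> C C' B h k m Hm g g' Eg; apply/funext => c'; apply: val_inj; apply/funext => a /=.
  by rewrite /phi_fun Eg /= Hm.
- move=> C B B' h h' k Hk g g' Eg c; apply/funext => a.
  by rewrite /hval /= /phi_fun Eg.
Qed.
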